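(* Let $\mathcal F$ be a class of maps between partitioned Banach spaces satisfying: (i) $\mathcal F(Y,Y)$ contains the identity for every partitioned $Y$; (ii) $\mathcal F(Y,Z)$ is a vector space for all partitioned $Y,Z$; (iii) if $A\colon Y\to U$ and $B\colon V\to Z$ are P-affine and $F\in\mathcal F(U,V)$, then $B\circ F\circ A\in\mathcal F(Y,Z)$, for all partitioned $Y,Z,U,V$. Then a P-affine equivariant partitioned integrator map $\phi$ is $\mathcal F$-invariant preserving if and only if it is $\mathcal F$-functionally equivariant.
   Context: All spaces are real Banach spaces; $\mathfrak X(Y)$ denotes smooth vector fields on $Y$. Fix $N$. A partitioned Banach space is $Y=Y^{[1]}\oplus\cdots\oplus Y^{[N]}$. A partitioned integrator map is a collection of smooth maps $\phi\colon\mathfrak X(Y)\to\mathfrak X(Y)$, one for each partitioned Banach space. $f\sim_\chi g$ means $\chi'(y)f(y)=g(\chi(y))$ for all $y$. A map $A\colon Y\to U$ between partitioned spaces is P-affine if $A=\bigoplus_\nu A^{[\nu]}$ with each $A^{[\nu]}\colon Y^{[\nu]}\to U^{[\nu]}$ affine; $\phi$ is P-affine equivariant if $f\sim_A g$ implies $\phi(f)\sim_A\phi(g)$ for all P-affine $A$. A class $\mathcal F$ assigns to each pair of partitioned spaces $Y,Z$ a set $\mathcal F(Y,Z)$ of Gâteaux differentiable maps $Y\to Z$. For $F\colon Y\to Z$ and $f\in\mathfrak X(Y)$, the augmented vector field $g(y,z)=(f(y),F'(y)f(y))$ lives on $Y\times Z$ partitioned as $\bigoplus_\nu(Y^{[\nu]}\times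 Z^{[\nu]})$; $\phi$ is $F$-functionally equivariant if $\phi(f)\sim_{(\mathrm{id},F)}\phi(g)$ for all $f$, with $(\mathrm{id},F)(y)=(y,F(y))$; $\phi$ is $F$-invariant preserving if $F'f=0$ implies $F'\phi(f)=0$ for all $f$. $\mathcal F$-functionally equivariant / $\mathcal F$-invariant preserving mean the respective property for all $F\in\mathcal F(Y,Z)$ and all partitioned $Y,Z$. *)

(* Defs.v *)
From HB Require Import structures.
From mathcomp Require Import all_boot all_order all_algebra.
From mathcomp Require Import all_classical all_reals all_analysis.
Import numFieldNormedType.Exports.
Import Order.TTheory GRing.Theory Num.Theory.

Set Implicit Arguments.
Unset Strict Implicit.
Unset Printing Implicit Defensive.

Local Open Scope ring_scope.
Local Open Scope classical_set_scope.

Section ProdComplete.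
Context {R : realType} (U V : completeNormedModType R).

Lemma prod_cauchy_cvg (F : set_system (U * V : normedModType R)) :
  ProperFilter F -> cauchy F -> cvg (F : set_system (U * V : normedModType R)).
Proof.
move=> FF /cauchy_ballP Fc.
have c1 : cauchy (fst @ F).
  apply/cauchy_ballP => e e0; rewrite near_simpl.
  by apply: filterS (Fc e e0) => -[[? ?] [? ?]] [].
have c2 : cauchy (snd @ F).
  apply/cauchy_ballP => e e0; rewrite near_simpl.
  by apply: filterS (Fc e e0) => -[[? ?] [? ?]] [].
apply/cvg_ex; exists (lim (fst @ F), lim (snd @ F)).
have H := cvg_pair (cauchy_cvg _ c1) (cauchy_cvg _ c2).
have {}H := H ltac:(typeclasses eauto) ltac:(typeclasses eauto)
  ltac:(typeclasses eauto) ltac:(typeclasses eauto) ltac:(typeclasses eauto).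
refine (cvg_trans _ H) => A /= FA.
by move: FA; rewrite /nbhs /=; apply: filterS => -[].
Qed.

HB.instance Definition _ := Uniform_isComplete.Build (U * V)%type prod_cauchy_cvg.

End ProdComplete.

Section Defs.
Context {R : realType} {N : nat}.

(** A partitioned Banach space Y = Y^[1] (+) ... (+) Y^[N]: a real Banach
    space together with the N bounded projections onto the summands
    (complementary: P_i P_j = delta_ij P_i and sum_i P_i = id). The summand
    Y^[i] is the range of [proj i]. *)
Record pspace := PSpace {
  psp :> completeNormedModType R;
  proj : 'I_N -> psp -> psp;
  proj_linear : forall i, linear (proj i);
  proj_cont : forall i, continuous (proj i);
  proj_proj : forall i j y, proj i (proj j y) = if i == j then proj i y else 0;
  proj_sum : forall y, \sum_i proj i y = y }.

Definition pprod_proj (Y Z : pspace) (i : 'I_N) (p : (Y * Z)%type) :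
  (Y * Z)%type := (proj i p.1, proj i p.2).
Arguments pprod_proj : clear implicits.

Lemma pprod_proj_linear (Y Z : pspace) i : linear (pprod_proj Y Z i).
Proof.
move=> a [y1 z1] [y2 z2].
by rewrite /pprod_proj /= (proj_linear i) (proj_linear i).
Qed.

Lemma pprod_proj_cont (Y Z : pspace) i : continuous (pprod_proj Y Z i).
Proof.
move=> p; apply: cvg_pair.
- apply: (@continuous_comp _ _ _ fst (proj i)); [exact: cvg_fst|exact: proj_cont].
- apply: (@continuous_comp _ _ _ snd (proj i)); [exact: cvg_snd|exact: proj_cont].
Qed.

Lemma pprod_proj_proj (Y Z : pspace) i j p :
  pprod_proj Y Z i (pprod_proj Y Z j p) =
  if i == j then pprod_proj Y Z i p else 0.
Proof.
rewrite /pprod_proj /= !proj_proj; by case: eqP.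
Qed.

Lemma pprod_proj_sum (Y Z : pspace) p : \sum_i pprod_proj Y Z i p = p.
Proof.
case: p => y z.
have h1 : (\sum_i pprod_proj Y Z i (y, z)).1 = \sum_i proj i y.
  by rewrite (big_morph fst (id1 := 0) (op1 := +%R)) //.
have h2 : (\sum_i pprod_proj Y Z i (y, z)).2 = \sum_i proj i z.
  by rewrite (big_morph snd (id1 := 0) (op1 := +%R)) //.
by move: h1 h2; rewrite !proj_sum; case: (\sum_i _) => a b /= -> ->.
Qed.

Definition pprod (Y Z : pspace) : pspace :=
  @PSpace (Y * Z)%type (pprod_proj Y Z) (@pprod_proj_linear Y Z)
    (@pprod_proj_cont Y Z) (@pprod_proj_proj Y Z) (@pprod_proj_sum Y Z).

(** Smoothness (C^infinity) in the sense of Michal--Bastiani: C^0 = continuous,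
    C^(k+1) = continuous, all directional (Gateaux) derivatives exist, and
    (x, v) |-> D_v f(x) is C^k on V x V. On Banach spaces this coincides
    with Frechet C^infinity. *)
Fixpoint Ck (k : nat) (V W : normedModType R) (f : V -> W) : Prop :=
  match k with
  | 0 => continuous f
  | k.+1 => [/\ continuous f, (forall x v, derivable f x v) &
             Ck k (fun p : (V * V)%type => derive f p.1 p.2)]
  end.

Definition smooth (V W : normedModType R) (f : V -> W) : Prop :=
  forall k, Ck k f.

Definition gateaux_differentiable (V W : normedModType R) (F : V -> W) : Prop :=
  forall y, (forall v, derivable F y v) /\
    linear (fun v => derive F y v) /\ continuous (fun v => derive F y v).

Definition related (V W : normedModType R) (chi : V -> W)
  (f : V -> V) (g : W -> W) : Prop :=
  forall y, derive chi y (f y) = g (chi y).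

Definition caffine (V W : normedModType R) (A : V -> W) : Prop :=
  continuous A /\ linear (fun y => A y - A 0).

(** P-affine maps A = (+)_nu A^[nu], A^[nu] : Y^[nu] -> U^[nu] affine.
    A^[nu] is represented by the affine map [Anu nu] o [proj nu] of Y,
    taking values in U^[nu]. *)
Definition paffine (Y U : pspace) (A : Y -> U) : Prop :=
  exists Anu : 'I_N -> Y -> U,
    [/\ forall i, caffine (Anu i),
        forall i y, proj i (Anu i y) = Anu i y &
        forall y, A y = \sum_i Anu i (proj i y)].

(** A partitioned integrator map: for every partitioned space Y, a map
    phi Y on vector fields on Y sending smooth vector fields to smooth
    vector fields, smoothly: it maps smooth curves of vector fields
    (t,y) |-> c t y to smooth curves (t,y) |-> phi Y (c t) y
    (smoothness on the space of smooth vector fields, convenient-calculus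
    sense). Only its values on smooth vector fields matter. *)
Definition integrator_map (phi : forall Y : pspace, (Y -> Y) -> (Y -> Y)) :
  Prop :=
  forall (Y : pspace) (c : R^o -> Y -> Y),
    smooth (fun p : (R^o * Y)%type => c p.1 p.2) ->
    smooth (fun p : (R^o * Y)%type => phi Y (c p.1) p.2).

Definition paffine_equivariant
  (phi : forall Y : pspace, (Y -> Y) -> (Y -> Y)) : Prop :=
  forall (Y U : pspace) (A : Y -> U), paffine A ->
  forall (f : Y -> Y) (g : U -> U), smooth f -> smooth g ->
    related A f g -> related A (phi Y f) (phi U g).

Definition map_class (Fc : forall Y Z : pspace, (Y -> Z) -> Prop) : Prop :=
  forall (Y Z : pspace) (F : Y -> Z), Fc Y Z F -> gateaux_differentiable F.

Definition class_has_id (Fc : forall Y Z : pspace, (Y -> Z) -> Prop) : Prop :=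
  forall Y : pspace, Fc Y Y id.

Definition class_vector_space (Fc : forall Y Z : pspace, (Y -> Z) -> Prop) :
  Prop :=
  forall Y Z : pspace,
    [/\ Fc Y Z (fun _ => 0),
        forall F G, Fc Y Z F -> Fc Y Z G -> Fc Y Z (fun y => F y + G y) &
        forall (a : R) F, Fc Y Z F -> Fc Y Z (fun y => a *: F y)].

Definition class_paffine_comp (Fc : forall Y Z : pspace, (Y -> Z) -> Prop) :
  Prop :=
  forall (Y Z U V : pspace) (A : Y -> U) (B : V -> Z) (F : U -> V),
    paffine A -> paffine B -> Fc U V F -> Fc Y Z (B \o F \o A).

Definition augmented (Y Z : pspace) (F : Y -> Z) (f : Y -> Y) :
  pprod Y Z -> pprod Y Z :=
  fun p => (f p.1, derive F p.1 (f p.1)).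

Definition graph_map (Y Z : pspace) (F : Y -> Z) : Y -> pprod Y Z :=
  fun y => (y, F y).

(** F-functional equivariance, for all F in the class. phi is only defined
    on smooth vector fields, so the condition is imposed whenever the
    augmented vector field g is smooth (as is needed for phi(g) to make
    sense). *)
Definition class_functionally_equivariant
  (Fc : forall Y Z : pspace, (Y -> Z) -> Prop)
  (phi : forall Y : pspace, (Y -> Y) -> (Y -> Y)) : Prop :=
  forall (Y Z : pspace) (F : Y -> Z), Fc Y Z F ->
  forall f : Y -> Y, smooth f -> smooth (augmented F f) ->
    related (graph_map F) (phi Y f) (phi (pprod Y Z) (augmented F f)).

Definition class_invariant_preserving
  (Fc : forall Y Z : pspace, (Y -> Z) -> Prop)
  (phi : forall Y : pspace, (Y -> Y) -> (Y -> Y)) : Prop :=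
  forall (Y Z : pspace) (F : Y -> Z), Fc Y Z F ->
  forall f : Y -> Y, smooth f ->
    (forall y, derive F y (f y) = 0) ->
    (forall y, derive F y (phi Y f y) = 0).

End Defs.

Arguments pspace R N : clear implicits.

(* Main.v *)
Require Import Defs.
From HB Require Import structures.
From mathcomp Require Import all_boot all_order all_algebra.
From mathcomp Require Import all_classical all_reals all_analysis.
Import numFieldNormedType.Exports.
Import Order.TTheory GRing.Theory Num.Theory.
Set Implicit Arguments.
Unset Strict Implicit.
Unset Printing Implicit Defensive.
Local Open Scope ring_scope.
Local Open Scope classical_set_scope.

Section Gen.
Context {R : realType}.

Definition dq (V W : normedModType R) (f : V -> W) a v :=
  fun h : R => h^-1 *: ((f \o shift a) (h *: v) - f a).

Lemma derive_near (V W : normedModType R) (f : V -> W) a v (u : R -> W) d :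
  (\forall t \near 0^', dq f a v t = u t) -> u @ 0^' --> d ->
  derivable f a v /\ derive f a v = d.
Proof.
move=> hn hu.
have H : dq f a v @ 0^' --> d.
  by apply: cvg_trans hu; apply: near_eq_cvg; apply: filterS hn => t ->.
split; first by apply/cvg_ex; exists d.
exact: cvg_lim H.
Qed.

Lemma cvg_pair2 (T : Type) (V W : normedModType R) (F : set_system T) {FF : Filter F}
  (u : T -> V) (w : T -> W) (a : V) (b : W) :
  u @ F --> a -> w @ F --> b -> (fun t => (u t, w t)) @ F --> ((a, b) : (V * W)%type).
Proof.
move=> ha hb.
have H := cvg_pair ha hb; have {}H := H ltac:(typeclasses eauto) ltac:(typeclasses eauto) ltac:(typeclasses eauto).
refine (cvg_trans H _) => A /= FA.
by move: FA; rewrite /nbhs /=.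
Qed.


Lemma derivable_dq (V W : normedModType R) (f : V -> W) a v :
  derivable f a v = cvg (dq f a v @ 0^').
Proof. by []. Qed.
Lemma derive_dq (V W : normedModType R) (f : V -> W) a v :
  derive f a v = lim (dq f a v @ 0^').
Proof. by []. Qed.

Lemma derive_pair (V W1 W2 : normedModType R) (u : V -> W1) (w : V -> W2) a v :
  derivable u a v -> derivable w a v ->
  derivable (fun x => ((u x, w x) : (W1 * W2)%type)) a v /\ derive (fun x => ((u x, w x) : (W1 * W2)%type)) a v = (derive u a v, derive w a v).
Proof.
move=> du dw.
apply: (derive_near _ (cvg_pair2 du dw)).
by apply: nearW => t.
Qed.

Lemma derive_constdq (V W : normedModType R) (f : V -> W) a v d :
  (forall t : R, t != 0 -> dq f a v t = d) ->
  derivable f a v /\ derive f a v = d.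
Proof.
move=> H; apply: (derive_near (u := fun _ => d)); last exact: cvg_cst.
near=> t; apply: H; near: t; exact: nbhs_dnbhs_neq.
Unshelve. all: by end_near.
Qed.

Lemma dq_comp_lin (V' V W : normedModType R) (h : V -> W) (L : V' -> V) a v :
  (forall x y (t : R), L (t *: y + x) = t *: L y + L x) ->
  dq (h \o L) a v = dq h (L a) (L v).
Proof. by move=> HL; apply: funext => t; rewrite /dq /= HL. Qed.

Definition linP (V' V : normedModType R) (L : V' -> V) :=
  forall x y (t : R), L (t *: y + x) = t *: L y + L x.

Lemma cont_lin0 (V' V W W' : normedModType R) (h : V -> W) (L : V' -> V) :
  continuous L -> continuous h ->
  continuous (fun x => ((h (L x), (0 : W')) : (W * W')%type)).
Proof.
move=> cL ch x; apply: cvg_pair2; last exact: cvg_cst.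
exact: (continuous_comp (cL x) (ch (L x))).
Qed.

Lemma Ck_lin0 k : forall (V' V W W' : normedModType R) (h : V -> W) (L : V' -> V),
  continuous L -> linP L -> Ck k h ->
  Ck k (fun x => ((h (L x), (0 : W')) : (W * W')%type)).
Proof.
elim: k => [|k IH] V' V W W' h L cL lL /=.
  by move=> ch; exact: cont_lin0.
move=> [ch dh hk]; split; first exact: cont_lin0.
  move=> x v.
  have dh' : derivable (h \o L) x v by rewrite derivable_dq dq_comp_lin // -derivable_dq.
  by have [] := derive_pair dh' (derivable_cst (0 : W') x v).
have E : (fun p : (V' * V')%type => derive (fun x => ((h (L x), (0 : W')) : (W * W')%type)) p.1 p.2)
  = (fun p => (((fun q : (V * V)%type => derive h q.1 q.2) ((fun p : (V' * V')%type => ((L p.1, L p.2) : (V * V)%type)) p), (0 : W')) : (W * W')%type)).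
  apply: funext => p /=.
  have dh' : derivable (h \o L) p.1 p.2 by rewrite derivable_dq dq_comp_lin // -derivable_dq.
  have [_ E'] := derive_pair dh' (derivable_cst (0 : W') p.1 p.2).
  rewrite [LHS]E'.
  by rewrite derive_cst derive_dq dq_comp_lin // -derive_dq.
rewrite E; apply: (IH _ _ _ _ (fun q : (V * V)%type => derive h q.1 q.2) (fun p : (V' * V')%type => ((L p.1, L p.2) : (V * V)%type))) => //.
- move=> p; apply: cvg_pair2.
  + exact: (continuous_comp (@cvg_fst _ _ _ _ _) (cL p.1)).
  + exact: (continuous_comp (@cvg_snd _ _ _ _ _) (cL p.2)).
- by move=> p q t; rewrite /= !lL.
Qed.
End Gen.

Lemma pair_ext (A B : Type) (x y : (A * B)%type) : x.1 = y.1 -> x.2 = y.2 -> x = y.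
Proof. by case: x; case: y => ? ? ? ? /= -> ->. Qed.

Lemma zmod_aux (M : zmodType) (a b c d : M) : a + b - c - (b - d) = a - (c - d).
Proof.
rewrite !opprB -[a + b - c]addrA -addrA; congr (_ + _).
by rewrite addrC addrA subrK.
Qed.

Section PS.
Context {R : realType} {N : nat}.
Local Notation ps := (pspace R N).

Lemma dproj0 (Y : ps) i : Defs.proj i (0 : Y) = 0.
Proof.
have := proj_linear i (-1) (0 : Y) 0.
by rewrite !scaleN1r oppr0 addr0 addNr.
Qed.

Lemma sum_pair (Y Z : normedModType R) (a : 'I_N -> Y) (b : 'I_N -> Z) :
  \sum_i ((a i, b i) : (Y * Z)%type) = (\sum_i a i, \sum_i b i).
Proof.
have h1 : (\sum_i ((a i, b i) : (Y * Z)%type)).1 = \sum_i a i.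
  by rewrite (big_morph fst (id1 := 0) (op1 := +%R)) //.
have h2 : (\sum_i ((a i, b i) : (Y * Z)%type)).2 = \sum_i b i.
  by rewrite (big_morph snd (id1 := 0) (op1 := +%R)) //.
by move: h1 h2; case: (\sum_i _) => ? ? /= -> ->.
Qed.

Lemma paffine_fst (Y Z : ps) : paffine (fun p : pprod Y Z => (p.1 : Y)).
Proof.
exists (fun i (p : pprod Y Z) => (Defs.proj i p.1 : Y)); split.
- move=> i; split.
  + move=> p; apply: (@continuous_comp _ _ _ fst (Defs.proj i)); [exact: cvg_fst|exact: proj_cont].
  + move=> a u v /=; rewrite dproj0 !subr0.
    by rewrite (proj_linear i).
- by move=> i y; rewrite proj_proj eqxx.
- move=> y /=; rewrite -{1}(proj_sum y.1); apply: eq_bigr => i _.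
  by rewrite proj_proj eqxx.
Qed.


Lemma paffine_snd (Y Z : ps) : paffine (fun p : pprod Y Z => (p.2 : Z)).
Proof.
exists (fun i (p : pprod Y Z) => (Defs.proj i p.2 : Z)); split.
- move=> i; split.
  + move=> p; apply: (@continuous_comp _ _ _ snd (Defs.proj i)); [exact: cvg_snd|exact: proj_cont].
  + move=> a u v /=; rewrite dproj0 !subr0.
    by rewrite (proj_linear i).
- by move=> i y; rewrite proj_proj eqxx.
- move=> y /=; rewrite -{1}(proj_sum y.2); apply: eq_bigr => i _.
  by rewrite proj_proj eqxx.
Qed.

Lemma paffine_id (Y : ps) : paffine (fun y : Y => y).
Proof.
exists (fun i (y : Y) => Defs.proj i y); split.
- move=> i; split; first exact: proj_cont.
  by move=> a u v /=; rewrite dproj0 !subr0 (proj_linear i).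
- by move=> i y; rewrite proj_proj eqxx.
- move=> y /=; rewrite -{1}(proj_sum y); apply: eq_bigr => i _.
  by rewrite proj_proj eqxx.
Qed.

Lemma paffine_c (Y Z : ps) (c : Z) :
  paffine (fun p : pprod Y Z => ((p.1, c) : pprod Y Z)).
Proof.
exists (fun i (p : pprod Y Z) => ((Defs.proj i p.1, Defs.proj i c) : pprod Y Z)); split.
- move=> i; split.
  + move=> p; apply: cvg_pair2; last exact: cvg_cst.
    apply: (@continuous_comp _ _ _ fst (Defs.proj i)); [exact: cvg_fst|exact: proj_cont].
  + move=> a u v /=; rewrite dproj0.
    apply: pair_ext => /=; first by rewrite !subr0 (proj_linear i).
    by rewrite subrr scaler0 addr0.
- by move=> i y /=; rewrite /pprod_proj /= !proj_proj eqxx.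
- move=> y /=; rewrite sum_pair -{1}(proj_sum y.1) -{1}(proj_sum c).
  by congr pair; apply: eq_bigr => i _; rewrite proj_proj eqxx.
Qed.

Lemma derive_fst (Y Z : ps) (p q : pprod Y Z) :
  derivable (fun p : pprod Y Z => (p.1 : Y)) p q /\
  derive (fun p : pprod Y Z => (p.1 : Y)) p q = q.1.
Proof.
apply: derive_constdq => t t0.
by rewrite /dq /= addrK scalerA mulVf // scale1r.
Qed.

Lemma derive_c (Y Z : ps) (c : Z) (p q : pprod Y Z) :
  derivable (fun p : pprod Y Z => ((p.1, c) : pprod Y Z)) p q /\
  derive (fun p : pprod Y Z => ((p.1, c) : pprod Y Z)) p q = ((q.1, 0) : pprod Y Z).
Proof.
apply: derive_constdq => t t0.
apply: pair_ext => /=.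
  by rewrite addrK scalerA mulVf // scale1r.
by rewrite subrr scaler0.
Qed.

Lemma derive_id (V : normedModType R) (y v : V) :
  derivable (fun x : V => x) y v /\ derive (fun x : V => x) y v = v.
Proof.
apply: derive_constdq => t t0.
by rewrite /dq /= addrK scalerA mulVf // scale1r.
Qed.

Lemma derive_graph (Y Z : ps) (F : Y -> Z) (y v : Y) :
  derivable F y v ->
  derive (graph_map F) y v = ((v, derive F y v) : pprod Y Z).
Proof.
move=> dF; have [d1 e1] := derive_id y v.
have [_ E] := derive_pair d1 dF.
by rewrite /graph_map [LHS]E e1.
Qed.

Lemma derive_G (Y Z : ps) (F : Y -> Z) (p q : pprod Y Z) :
  derivable F p.1 q.1 ->
  derive (fun p : pprod Y Z => (p.2 : Z) + (-1) *: F p.1) p q = q.2 - derive F p.1 q.1.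
Proof.
move=> dF.
have H : (fun t => q.2 - dq F p.1 q.1 t) @ 0^' --> q.2 - derive F p.1 q.1.
  by apply: cvgB; [exact: cvg_cst|exact: dF].
apply: (proj2 (derive_near _ H)).
near=> t.
have t0 : t != 0 by near: t; exact: nbhs_dnbhs_neq.
rewrite /dq /= !scaleN1r zmod_aux scalerBr scalerA mulVf // scale1r.
Unshelve. all: by end_near.
Qed.

End PS.

Unset Implicit Arguments.
Theorem theorem4p16 (R : realType) (N : nat)
  (Fc : forall Y Z : pspace R N, (Y -> Z) -> Prop)
  (phi : forall Y : pspace R N, (Y -> Y) -> (Y -> Y)) :
  map_class Fc ->
  class_has_id Fc ->
  class_vector_space Fc ->
  class_paffine_comp Fc ->
  integrator_map phi ->
  paffine_equivariant phi ->
  (class_invariant_preserving Fc phi <-> class_functionally_equivariant Fc phi).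
Proof.
move=> hmap hid hvs hcomp _ hequi; split.
- move=> IP Y Z F FF f sf sg y.
  set g := augmented F f in sg *.
  have dF := hmap _ _ _ FF.
  have Hfst : forall p, (phi (pprod Y Z) g p).1 = phi Y f p.1.
    have := hequi (pprod Y Z) Y (fun p => p.1) (paffine_fst Y Z) g f sg sf.
    have Hr : related (fun p : pprod Y Z => p.1) g f.
      by move=> q; have [_ ->] := derive_fst q (g q).
    move=> H p; have := H Hr p.
    by have [_ ->] := derive_fst p (phi (pprod Y Z) g p).
  have h1 := hcomp (pprod Y Z) Z Z Z (fun p => p.2) (fun z => z) id
     (paffine_snd Y Z) (paffine_id Z) (hid Z).
  have h2 := hcomp (pprod Y Z) Z Y Z (fun p => p.1) (fun z => z) F
     (paffine_fst Y Z) (paffine_id Z) FF.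
  have [_ hadd hsc] := hvs (pprod Y Z) Z.
  have hG := hadd _ _ h1 (hsc (-1) _ h2).
  have := IP _ _ _ hG g sg.
  move=> H2.
  have H3 : forall p, (phi (pprod Y Z) g p).2 = derive F p.1 (phi (pprod Y Z) g p).1.
    have Hp : forall q, derive (fun p : pprod Y Z => ((fun z : Z => z) \o id \o (fun p : pprod Y Z => p.2)) p + (-1) *: ((fun z : Z => z) \o F \o (fun p : pprod Y Z => p.1)) p) q (g q) = 0.
      move=> q /=; rewrite (derive_G (proj1 (dF _) _)) /=.
      by rewrite subrr.
    move=> p; have := H2 Hp p.
    rewrite /= (derive_G (proj1 (dF _) _)) => /eqP; rewrite subr_eq0 => /eqP //.
  rewrite derive_graph; last exact: (proj1 (dF _) _).
  apply: pair_ext => /=.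
    by rewrite Hfst.
  by rewrite H3 Hfst.
- move=> FE Y Z F FF f sf H0 y.
  have dF := hmap _ _ _ FF.
  have eg : augmented F f = (fun p : pprod Y Z => ((f p.1, 0) : pprod Y Z)).
    by apply: funext => p; rewrite /augmented H0.
  have sg : smooth (augmented F f).
    rewrite eg => k.
    apply: (@Ck_lin0 R k (pprod Y Z) Y Y Z f (fun p : pprod Y Z => p.1)).
    + by move=> p; apply: cvg_fst.
    + by [].
    + exact: sf.
  have := FE Y Z F FF f sf sg y.
  rewrite derive_graph; last exact: (proj1 (dF _) _).
  move=> /(congr1 snd) /= ->.
  have := hequi (pprod Y Z) (pprod Y Z) (fun p => ((p.1, F y) : pprod Y Z))
    (paffine_c Y (F y)) _ _ sg sg.
  have Hr : related (fun p : pprod Y Z => ((p.1, F y) : pprod Y Z)) (augmented F f) (augmented F f).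
    by move=> q; have [_ ->] := derive_c (F y) q (augmented F f q); rewrite eg.
  move=> H; have := H Hr (y, F y).
  have [_ ->] := derive_c (F y) (y, F y) (phi (pprod Y Z) (augmented F f) (y, F y)).
  by move=> /(congr1 snd) /= <-.
Qed.
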